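(* There is an absolute constant $c>0$ such that for all sufficiently large $n$ there is no graph on $n$ vertices in which every induced subgraph on $c\log^3 n/\log\log n$ vertices contains both a clique of size $\log n$ and an independent set of size $\log n$.
   Context: Logarithms are natural; floors and ceilings are ignored. *)

(* Defs.v *)
From mathcomp Require Import all_boot.
From Stdlib Require Import Reals.
Set Implicit Arguments. Unset Strict Implicit. Unset Printing Implicit Defensive.

(* floor of a real, as a natural number (0 for negative inputs) *)
Definition floor_nat (x : R) : nat := Z.to_nat (Int_part x).

(* A simple graph on vertex set 'I_n is a symmetric irreflexive relation E. *)
Definition is_clique (n : nat) (E : rel 'I_n) (K : {set 'I_n}) : Prop :=
  forall x y, x \in K -> y \in K -> x != y -> E x y.

Definition is_independent (n : nat) (E : rel 'I_n) (K : {set 'I_n}) : Prop :=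
  forall x y, x \in K -> y \in K -> x != y -> ~~ E x y.

(* Main.v *)
Require Import Defs.
From mathcomp Require Import all_boot.
From mathcomp Require Import zify.
Set Implicit Arguments. Unset Strict Implicit. Unset Printing Implicit Defensive.

Definition indepb (n:nat) (E: rel 'I_n) (I : {set 'I_n}) : bool :=
  [forall x in I, forall y in I, (x != y) ==> ~~ E x y].

Definition inds n (E : rel 'I_n) (Y : {set 'I_n}) (j : nat) : {set {set 'I_n}} :=
  [set I : {set 'I_n} | (I \subset Y) && (#|I| == j) && indepb E I].

Definition Zs n (E : rel 'I_n) (Y I : {set 'I_n}) : {set 'I_n} :=
  [set y in Y | (y \notin I) && [forall x in I, ~~ E x y]].

Lemma indepbP n (E : rel 'I_n) (I : {set 'I_n}) :
  reflect (forall x y, x \in I -> y \in I -> x != y -> ~~ E x y) (indepb E I).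
Proof.
apply: (iffP forallP) => H.
- move=> x y xI yI xy. move: (H x) => /implyP /(_ xI) /forallP /(_ y) /implyP /(_ yI) /implyP; exact.
- move=> x; apply/implyP => xI; apply/forallP => y; apply/implyP => yI; apply/implyP; exact: H.
Qed.

Lemma indepb_sub n (E : rel 'I_n) (I J : {set 'I_n}) : J \subset I -> indepb E I -> indepb E J.
Proof.
move=> /subsetP sJI /indepbP H; apply/indepbP => x y xJ yJ; apply: H; exact: sJI.
Qed.

Lemma ex_sub (T : finType) (A : {set T}) j : j <= #|A| -> exists B : {set T}, B \subset A /\ #|B| = j.
Proof.
elim: j => [|j IH] H.
  by exists set0; rewrite sub0set cards0.
have [B [sB cB]] := IH (ltnW H).
have : 0 < #|A :\: B| by rewrite cardsD (setIidPr sB) cB subn_gt0.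
case/card_gt0P => x; rewrite inE => /andP[xB xA].
exists (x |: B); split; first by rewrite subUset sub1set xA sB.
by rewrite cardsU1 xB cB.
Qed.

Lemma card_sub_sum (T : finType) (A : {set T}) (P : pred T) :
  #|[set x in A | P x]| = \sum_(x in A) (P x : nat).
Proof.
rewrite -sum1_card big_mkcond [RHS]big_mkcond /=.
apply: eq_bigr => x _; rewrite inE; by case: (x \in A); case: (P x).
Qed.


Lemma setIn_sub (T : finType) (Y J : {set T}) : J \subset Y -> [set y in Y | y \in J] = J.
Proof. move=> sJ; apply/setP => y; rewrite inE; case yJ: (y \in J); last by rewrite andbF.
by rewrite (subsetP sJ). Qed.

Lemma count_pairs n (E : rel 'I_n) Y j :
  #|inds E Y j.+1| <= \sum_(y in Y) #|[set J in inds E Y j.+1 | y \in J]|.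
Proof.
under eq_bigr => y _ do rewrite card_sub_sum.
rewrite exchange_big /=.
rewrite -sum1_card; apply: leq_sum => J; rewrite inE => /andP[/andP[sJ /eqP cJ] _].
by rewrite -card_sub_sum setIn_sub // cJ.
Qed.

Lemma inj_y n (E : rel 'I_n) Y j y :
  #|[set J in inds E Y j.+1 | y \in J]| <= #|[set I in inds E Y j | y \in Zs E Y I]|.
Proof.
rewrite -(@card_in_imset _ _ (fun J => J :\ y)).
  apply: subset_leq_card; apply/subsetP => I /imsetP [J].
  rewrite !inE => /andP[/andP[/andP[sJ /eqP cJ] iJ] yJ] ->.
  rewrite !inE.
  have -> : (J :\ y) \subset Y by apply: subset_trans sJ; apply: subD1set.
  have -> : #|J :\ y| == j by move: cJ; rewrite (cardsD1 y J) yJ add1n => -[->].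
  have -> : indepb E (J :\ y) by apply: indepb_sub iJ; apply: subD1set.
  rewrite (subsetP sJ) //= eqxx /=; apply/forallP => x; apply/implyP.
  rewrite !inE => /andP[xy xJ]; move/indepbP: iJ; apply => //.
move=> J1 J2; rewrite !inE => /andP[_ y1] /andP[_ y2] e.
by rewrite -(setD1K y1) -(setD1K y2) e.
Qed.

Lemma ind_step n (E : rel 'I_n) Y j : #|inds E Y j.+1| <= #|Y| * #|inds E Y j|.
Proof.
apply: (leq_trans (count_pairs E Y j)).
rewrite -sum_nat_const; apply: leq_sum => y _.
apply: (leq_trans (inj_y E Y j y)); apply: subset_leq_card.
by apply/subsetP => I; rewrite inE => /andP[].
Qed.

Lemma ind_bound n (E : rel 'I_n) Y j : #|inds E Y j| <= #|Y| ^ j.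
Proof.
elim: j => [|j IH].
  rewrite expn0; apply/card_le1_eqP => I1 I2; rewrite !inE.
  move=> /andP[/andP[_ /eqP c1] _] /andP[/andP[_ /eqP c2] _].
  by move/cards0_eq: c1 ->; move/cards0_eq: c2 ->.
apply: (leq_trans (ind_step E Y j)); rewrite expnS; exact: leq_mul.
Qed.

Lemma avg n (E : rel 'I_n) Y j :
  #|inds E Y j.+1| <= \sum_(I in inds E Y j) #|Zs E Y I|.
Proof.
apply: (leq_trans (count_pairs E Y j)).
apply: (@leq_trans (\sum_(y in Y) #|[set I in inds E Y j | y \in Zs E Y I]|)).
  apply: leq_sum => y _; exact: inj_y.
under eq_bigr => y _ do rewrite card_sub_sum.
rewrite exchange_big /=; apply: leq_sum => I _.
rewrite -card_sub_sum setIn_sub //; apply/subsetP => y; rewrite inE; by case/andP.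
Qed.


Definition HP n (E : rel 'I_n) m k := forall S : {set 'I_n}, #|S| = m ->
  exists I : {set 'I_n}, I \subset S /\ #|I| = k /\ indepb E I.

Lemma ind_pos n (E : rel 'I_n) m k (Y : {set 'I_n}) j : HP E m k -> m <= #|Y| -> j <= k ->
  0 < #|inds E Y j|.
Proof.
move=> hp mY jk.
have [S [sS cS]] := ex_sub mY.
have [I [sI [cI iI]]] := hp S cS.
have [J [sJ cJ]] : exists J : {set 'I_n}, J \subset I /\ #|J| = j by apply: ex_sub; rewrite cI.
apply/card_gt0P; exists J; rewrite inE cJ eqxx andbT.
rewrite (subset_trans sJ (subset_trans sI sS)) /=.
exact: indepb_sub iI.
Qed.

Lemma bern N k : k <= N -> (N - k) * N ^ k <= N * (N - 1) ^ k.
Proof.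
elim: k => [|k IH] H; first by rewrite !expn0 subn0.
have IH' := IH (ltnW H).
rewrite !expnS.
have h1 : N * (N - k.+1) <= (N - 1) * (N - k) by nia.
have h2 : (N - k.+1) * (N * N ^ k) = (N * (N - k.+1)) * N ^ k by nia.
rewrite h2; apply: (leq_trans (leq_mul h1 (leqnn _))).
have h3 : (N - 1) * (N - k) * N ^ k = (N - 1) * ((N - k) * N ^ k) by nia.
rewrite h3; apply: (leq_trans (leq_mul (leqnn _) IH')).
have h4 : (N - 1) * (N * (N - 1) ^ k) = N * ((N - 1) * (N - 1) ^ k) by nia.
by rewrite h4.
Qed.

Lemma sum_remove n (E : rel 'I_n) (Y : {set 'I_n}) k :
  \sum_(y in Y) #|inds E (Y :\ y) k| = #|inds E Y k| * (#|Y| - k).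
Proof.
have e : forall y, inds E (Y :\ y) k = [set I in inds E Y k | y \notin I].
  move=> y; apply/setP => I; rewrite !inE.
  case yI: (y \in I) => /=; last first.
    suff -> : (I \subset Y :\ y) = (I \subset Y) by rewrite andbT.
    apply/idP/idP => H.
      by apply: (subset_trans H (subD1set _ _)).
    apply/subsetP => x xI; rewrite !inE (subsetP H) // andbT.
    by apply/eqP => exy; rewrite -exy xI in yI.
  rewrite andbF; apply/negbTE; apply/negP => /andP[/andP[/subsetP H _] _].
  by move: (H y yI); rewrite !inE eqxx.
under eq_bigr => y _ do rewrite e card_sub_sum.
rewrite exchange_big /= -sum_nat_const; apply: eq_bigr => I.
rewrite inE => /andP[/andP[sI /eqP cI] _].
rewrite -card_sub_sum.
have -> : [set y in Y | y \notin I] = Y :\: I by apply/setP => y; rewrite !inE andbC.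
by rewrite cardsD (setIidPr sI) cI.
Qed.

Lemma fact1 n (E : rel 'I_n) m k : HP E m k -> k <= m ->
  forall Y : {set 'I_n}, m <= #|Y| -> #|Y| ^ k <= #|inds E Y k| * m ^ k.
Proof.
move=> hp km.
suff : forall d (Y : {set 'I_n}), #|Y| = m + d -> #|Y| ^ k <= #|inds E Y k| * m ^ k.
  by move=> H Y mY; apply: (H (#|Y| - m)); rewrite subnKC.
elim=> [|d IH] Y cY.
  have h := @ind_pos n E m k Y k hp (eq_leq (esym (etrans cY (addn0 m)))) (leqnn k).
  rewrite cY addn0.
  by rewrite -{1}(mul1n (m ^ k)) leq_mul2r h orbT.
set N := #|Y|.
have Npos : 0 < N by rewrite /N cY addnS.
have hy : forall y, y \in Y -> (N - 1) ^ k <= #|inds E (Y :\ y) k| * m ^ k.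
  move=> y yY; have c1 : #|Y :\ y| = m + d.
    by move: cY; rewrite (cardsD1 y Y) yY addnS add1n => -[].
  by have := IH _ c1; rewrite c1 /N cY addnS subn1.
have S1 : N * (N - 1) ^ k <= #|inds E Y k| * (N - k) * m ^ k.
  rewrite /N -sum_remove big_distrl /=.
  rewrite -sum_nat_const /N; apply: leq_sum => y yY.
  exact: hy.
have kN0 : k <= N by rewrite /N cY; lia.
have S2 := bern kN0.
have kN : 0 < N - k by rewrite /N cY; lia.
have S3 : (N - k) * N ^ k <= (N - k) * (#|inds E Y k| * m ^ k).
  apply: (leq_trans S2); apply: (leq_trans S1).
  by rewrite [_ * (N - k)]mulnC -mulnA.
by rewrite leq_mul2l in S3; move/orP: S3 => [|//]; rewrite -subn_eq0 => /eqP h; rewrite h in kN.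
Qed.


Lemma Qbig m k d : 0 < m -> 0 < d -> k <= 2 * d -> m ^ k < (2 * m ^ 2) ^ d.
Proof.
move=> m0 d0 kd.
rewrite expnMn -expnM.
have h1 : m ^ k <= m ^ (2 * d) by rewrite leq_pexp2l.
have h2 : 2 <= 2 ^ d by rewrite -{1}(expn1 2) leq_pexp2l.
have h3 : 0 < m ^ k by rewrite expn_gt0 m0.
have h4 := leq_mul h2 h1.
lia.
Qed.

Lemma core n (E : rel 'I_n) m k (hp : HP E m k) (k1 : 0 < k) (km : k <= m)
  (Y : {set 'I_n}) (mY : m <= #|Y|) :
  exists I Z : {set 'I_n}, [/\ I \subset Y, k %/ 2 <= #|I|, indepb E I, Z \subset Y &
    [/\ I :&: Z = set0, (forall x y, x \in I -> y \in Z -> ~~ E x y) &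
        #|Y| <= #|Z| * (2 * m ^ 2)]].
Proof.
set N := #|Y|; set Q := 2 * m ^ 2; set j0 := k %/ 2.
have m0 : 0 < m by apply: leq_trans k1 km.
have N0 : 0 < N by apply: leq_trans m0 mY.
have [j [j0j jk good]] : exists j, [/\ j0 <= j, j < k & N * #|inds E Y j| <= #|inds E Y j.+1| * Q].
  case: (boolP [exists j : 'I_k, (j0 <= j) && (N * #|inds E Y j| <= #|inds E Y j.+1| * Q)]).
    by case/existsP => j /andP[a b]; exists j.
  move=> /existsPn bad.
  have chain : forall d, j0 + d <= k -> #|inds E Y (j0 + d)| * Q ^ d <= N ^ d * #|inds E Y j0|.
    elim=> [|d IH] h; first by rewrite addn0 !expn0 muln1 mul1n.
    have lt : j0 + d < k by rewrite -addnS.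
    have := bad (Ordinal lt); rewrite /= leq_addr /= -ltnNge => b.
    have IH' := IH (ltnW lt).
    rewrite addnS !expnS.
    have h1 := leq_mul (ltnW b) (leqnn (Q ^ d)).
    have h2 := leq_mul (leqnn N) IH'.
    rewrite mulnA; apply: (leq_trans h1); rewrite -!mulnA; exact: h2.
  set d := k - j0.
  have hd : j0 + d = k by rewrite /d /j0 subnKC // leq_div.
  have c1 := chain d (eq_leq hd); rewrite hd in c1.
  have c2 := ind_bound E Y j0.
  have c3 := fact1 hp km mY.
  have d0 : 0 < d by rewrite /d /j0; lia.
  have kd : k <= 2 * d by rewrite /d /j0; lia.
  have c4 := Qbig m0 d0 kd.
  have Nk : 0 < N ^ k by rewrite expn_gt0 N0.
  have e1 : N ^ k * Q ^ d <= (m ^ k) * N ^ k.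
    apply: (leq_trans (leq_mul c3 (leqnn _))).
    rewrite mulnAC mulnC leq_mul2l; apply/orP; right.
    apply: (leq_trans c1); rewrite -hd expnD mulnC leq_mul2r; apply/orP; right; exact: c2.
  rewrite mulnC leq_mul2r in e1; move/orP: e1 => [|e1]; first by move/eqP => e; rewrite e in Nk.
  by move: c4; rewrite ltnNge e1.
have ip : 0 < #|inds E Y j| by apply: (ind_pos hp mY (ltnW jk)).
have [I0 I0in _] := eq_bigmax_cond (fun I => #|Zs E Y I|) ip.
have [I II maxI] := eq_bigmax_cond (fun I => #|Zs E Y I|) ip.
have av := avg E Y j.
have sumle : \sum_(I in inds E Y j) #|Zs E Y I| <= #|inds E Y j| * #|Zs E Y I|.
  rewrite -sum_nat_const -maxI; apply: leq_sum => I' I'in.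
  exact: (@leq_bigmax_cond _ (fun I => I \in inds E Y j) (fun I => #|Zs E Y I|) I' I'in).
move: II; rewrite inE => /andP[/andP[sI /eqP cI] iI].
exists I, (Zs E Y I); split => //.
- by rewrite cI.
- by apply/subsetP => y; rewrite inE => /andP[].
split.
- apply/setP => y; rewrite !inE; case: (y \in I) => //=; by rewrite andbF.
- move=> x y xI; rewrite inE => /andP[_ /andP[_ /forallP H]]; move/implyP: (H x); exact.
have : N * #|inds E Y j| <= #|inds E Y j| * #|Zs E Y I| * Q.
  apply: (leq_trans good); rewrite leq_mul2r; apply/orP; right; exact: (leq_trans av sumle).
move=> H; rewrite [N * _]mulnC -mulnA leq_mul2l in H.
move/orP: H => [|//]; by move/eqP => e; rewrite e in ip.
Qed.


Lemma iterB n (E : rel 'I_n) (sym : symmetric E) m k (hp : HP E m k) (k1 : 0 < k) (km : k <= m) :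
  forall t (Y : {set 'I_n}), m * (2 * m ^ 2) ^ t <= #|Y| ->
  exists I : {set 'I_n}, [/\ I \subset Y, t * (k %/ 2) <= #|I| & indepb E I].
Proof.
have m0 : 0 < m by apply: leq_trans k1 km.
have Q0 : 0 < 2 * m ^ 2 by rewrite muln_gt0 expn_gt0 m0.
elim=> [|t IH] Y hY.
  by exists set0; rewrite sub0set mul0n; split => //; apply/indepbP => x y; rewrite inE.
have mY : m <= #|Y|.
  apply: leq_trans hY; rewrite -{1}(muln1 m) leq_mul2l; apply/orP; right.
  by rewrite expn_gt0 Q0.
have [I [Z [sI cI iI sZ [dIZ anti ZQ]]]] := core hp k1 km mY.
have hZ : m * (2 * m ^ 2) ^ t <= #|Z|.
  have : m * (2 * m ^ 2) ^ t * (2 * m ^ 2) <= #|Z| * (2 * m ^ 2).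
    by apply: leq_trans ZQ; rewrite -mulnA -expnSr.
  by rewrite leq_mul2r; case/orP => // /eqP e; rewrite e in Q0.
have [J [sJ cJ iJ]] := IH Z hZ.
exists (I :|: J); split.
- by rewrite subUset sI (subset_trans sJ sZ).
- have dIJ : I :&: J = set0.
    apply/setP => y; rewrite !inE; case yI: (y \in I) => //=.
    apply/negbTE/negP => yJ.
    have : y \in I :&: Z by rewrite inE yI (subsetP sJ).
    by rewrite dIZ inE.
  rewrite cardsU dIJ cards0 subn0 mulSn; exact: leq_add.
- apply/indepbP => x y; rewrite !inE => /orP[xI|xJ] /orP[yI|yJ] xy.
  + by move/indepbP: iI; apply.
  + exact: anti xI (subsetP sJ _ yJ).
  + by rewrite sym; exact: anti yI (subsetP sJ _ xJ).
  + by move/indepbP: iJ; apply.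
Qed.

Lemma unionC n (E : rel 'I_n) R s :
  (forall Y' : {set 'I_n}, R <= #|Y'| -> exists I : {set 'I_n}, [/\ I \subset Y', s <= #|I| & indepb E I]) ->
  forall t' (Y : {set 'I_n}), R + t' * s <= #|Y| ->
  exists T : {set 'I_n}, [/\ T \subset Y, #|T| = t' * s &
     forall K : {set 'I_n}, K \subset T -> is_clique E K -> #|K| <= t'].
Proof.
move=> HI; elim=> [|t IH] Y hY.
  exists set0; split; rewrite ?sub0set ?cards0 //.
  by move=> K sK _; rewrite subset0 in sK; rewrite (eqP sK) cards0.
have [I0 [sI0 cI0 iI0]] := HI Y (leq_trans (leq_addr _ _) hY).
have [I [sI cI]] := ex_sub cI0.
have iI := indepb_sub sI iI0.
have sIY := subset_trans sI sI0.
have hY' : R + t * s <= #|Y :\: I|.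
  rewrite cardsD (setIidPr sIY) cI; move: hY; rewrite mulSn; lia.
have [T [sT cT cl]] := IH _ hY'.
exists (I :|: T); split.
- by rewrite subUset sIY (subset_trans sT (subsetDl _ _)).
- have dIT : I :&: T = set0.
    apply/setP => y; rewrite !inE; case yI: (y \in I) => //=.
    apply/negbTE/negP => /(subsetP sT); by rewrite inE yI.
  by rewrite cardsU dIT cards0 subn0 cI cT mulSn.
move=> K sK clK.
rewrite -(cardsID I K).
have h1 : #|K :&: I| <= 1.
  apply/card_le1_eqP => x y; rewrite !inE => /andP[xK xI] /andP[yK yI].
  apply/eqP; apply/negP => /negP xy.
  by move/indepbP: iI => /(_ y x yI xI xy); rewrite (clK y x yK xK xy).
have h2 : #|K :\: I| <= t.
  apply: cl.
    apply/subsetP => x; rewrite inE => /andP[xI xK].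
    by move: (subsetP sK x xK); rewrite inE (negbTE xI).
  move=> x y; rewrite !inE => /andP[_ xK] /andP[_ yK]; exact: clK.
by rewrite -add1n; apply: leq_add.
Qed.

Lemma comb n (E : rel 'I_n) (sym : symmetric E) m k t t' (hp : HP E m k)
  (k1 : 0 < k) (km : k <= m) (H1 : m <= t' * (t * (k %/ 2)))
  (H2 : m * (2 * m ^ 2) ^ t + t' * (t * (k %/ 2)) <= n) :
  exists S : {set 'I_n}, #|S| = m /\
    forall K : {set 'I_n}, K \subset S -> is_clique E K -> #|K| <= t'.
Proof.
have HY : m * (2 * m ^ 2) ^ t + t' * (t * (k %/ 2)) <= #|[set: 'I_n]|
  by rewrite cardsT card_ord.
have [T [_ cT cl]] := unionC (iterB sym hp k1 km (t := t)) HY.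
have [S [sS cS]] : exists S : {set 'I_n}, S \subset T /\ #|S| = m by apply: ex_sub; rewrite cT.
exists S; split => // K sK; apply: cl; exact: subset_trans sK sS.
Qed.


From Stdlib Require Import Reals.
From Stdlib Require Import Lra Lia Psatz.

Lemma exp_mono (x y : R) : (x <= y)%R -> (exp x <= exp y)%R.
Proof. move=> h; case: (Rle_lt_or_eq_dec _ _ h) => [h'|->]; last lra.
by apply: Rlt_le; apply: exp_increasing. Qed.

Lemma ln_mono (x y : R) : (0 < x)%R -> (x <= y)%R -> (ln x <= ln y)%R.
Proof. move=> x0 h; case: (Rle_lt_or_eq_dec _ _ h) => [h'|->]; last lra.
by apply: Rlt_le; apply: ln_increasing. Qed.

Lemma exp_ge (x : R) : (0 <= x)%R -> (x <= exp x)%R.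
Proof. move=> _; have := exp_ineq1_le x; lra. Qed.

Lemma floor_spec {x : R} : (0 <= x)%R ->
  (INR (floor_nat x) <= x)%R /\ (x < INR (floor_nat x) + 1)%R.
Proof.
move=> x0; have [h1 h2] := base_Int_part x.
have hz : (0 <= Int_part x)%Z.
  have : (-1 < IZR (Int_part x))%R by lra.
  change (-1)%R with (IZR (-1)); move/lt_IZR; lia.
have e : INR (floor_nat x) = IZR (Int_part x).
  by rewrite /floor_nat INR_IZR_INZ Znat.Z2Nat.id.
rewrite e; lra.
Qed.

Lemma INR_addn m n : INR (m + n) = (INR m + INR n)%R.
Proof. exact: plus_INR. Qed.
Lemma INR_muln m n : INR (m * n) = (INR m * INR n)%R.
Proof. exact: mult_INR. Qed.
Lemma INR_expn m n : INR (expn m n) = (INR m ^ n)%R.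
Proof. elim: n => [|n IH]; first by rewrite expn0 /=. by rewrite expnS INR_muln IH /=. Qed.
Lemma INR_leq {m n} : (INR m <= INR n)%R -> m <= n.
Proof. by move/INR_le/leP. Qed.
Lemma leq_INR {m n} : m <= n -> (INR m <= INR n)%R.
Proof. by move/leP/le_INR. Qed.

Lemma exp_pow (a : R) t : (exp a ^ t)%R = exp (INR t * a).
Proof.
elim: t => [|t IH]; first by rewrite /= Rmult_0_l exp_0.
have e : INR t.+1 = (INR t + 1)%R by apply: S_INR.
rewrite e; change (exp a ^ t.+1)%R with (exp a * exp a ^ t)%R.
rewrite IH -exp_plus; congr exp; lra.
Qed.

Lemma lnL_small (L : R) : (6400 <= L)%R -> (ln L <= L / 40)%R.
Proof.
move=> hL.
have h1 : (L <= exp (L / 40))%R.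
  have e : exp (L / 40) = (exp (L / 80) * exp (L / 80))%R by rewrite -exp_plus; congr exp; lra.
  have h2 := exp_ineq1_le (L / 80).
  rewrite e. nra.
have := @ln_mono L (exp (L / 40)) ltac:(lra) h1; by rewrite ln_exp.
Qed.

Lemma big_exp (L : R) : (8192 <= L)%R -> (2 * L ^ 3 <= exp (13 * L / 20))%R.
Proof.
move=> hL.
have e : exp (L / 2) = (exp (L / 8) * exp (L / 8) * (exp (L / 8) * exp (L / 8)))%R
  by rewrite -!exp_plus; congr exp; lra.
have h2 := exp_ineq1_le (L / 8).
have h3 : (exp (L/2) <= exp (13 * L / 20))%R by apply: exp_mono; lra.
have h4 : ((L/8) * (L/8) * ((L/8) * (L/8)) <= exp (L / 2))%R.
  rewrite e.
  have a : (0 <= L/8)%R by lra.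
  have b : (L/8 <= exp (L/8))%R by lra.
  have c := Rmult_le_compat _ _ _ _ a a b b.
  have dd : (0 <= L/8 * (L/8))%R by nra.
  exact (Rmult_le_compat _ _ _ _ dd dd c c).
have h5 : (2 * L ^ 3 <= (L/8) * (L/8) * ((L/8) * (L/8)))%R.
  have : (2 * L^3 * 4096 <= L * L * (L * L))%R.
    have : (0 <= L ^ 3)%R by apply: pow_le; lra.
    rewrite /=. nra.
  lra.
lra.
Qed.


Theorem mainTheorem9 :
  exists c : R, (0 < c)%R /\
  exists N : nat, forall n : nat, (N <= n)%N ->
  forall E : rel 'I_n, symmetric E -> irreflexive E ->
  ~ (forall S : {set 'I_n},
       #|S| = floor_nat (c * (ln (INR n)) ^ 3 / ln (ln (INR n)))%R ->
       (exists K : {set 'I_n}, K \subset S /\ is_clique E K /\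
                               (ln (INR n) <= INR #|K|)%R) /\
       (exists I : {set 'I_n}, I \subset S /\ is_independent E I /\
                               (ln (INR n) <= INR #|I|)%R)).
Proof.
exists (1/200)%R; split; first lra.
exists (Z.to_nat (up (exp 10000))).
move=> n Nn E sym _ H.
have nge : (exp 10000 <= INR n)%R.
  have [a _] := archimed (exp 10000).
  have e0 := exp_pos 10000.
  have up0 : (0 <= up (exp 10000))%Z by apply: le_IZR; lra.
  have := leq_INR Nn; rewrite INR_IZR_INZ Znat.Z2Nat.id //; lra.
have npos : (0 < INR n)%R by have := exp_pos 10000; lra.
set L := ln (INR n).
have L10 : (10000 <= L)%R.
  by have := @ln_mono (exp 10000) (INR n) (exp_pos _) nge; rewrite ln_exp.
have Lexp : exp L = INR n by rewrite /L exp_ln.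
set l := ln L.
have l1 : (1 <= l)%R.
  have := @ln_mono (exp 1) L (exp_pos _) ltac:(have := exp_le_3; lra).
  by rewrite ln_exp.
have l40 : (l <= L / 40)%R by apply: lnL_small; lra.
set x := (1 / 200 * L ^ 3 / l)%R.
have x0 : (0 <= x)%R.
  rewrite /x; apply: Rmult_le_pos; last by apply: Rlt_le; apply: Rinv_0_lt_compat; lra.
  by apply: Rmult_le_pos; [lra | apply: pow_le; lra].
set M := floor_nat x.
have [M1 M2] := floor_spec x0; rewrite -/M in M1 M2.
set k := floor_nat L.
have [k1r k2r] := floor_spec (ltac:(lra) : (0 <= L)%R); rewrite -/k in k1r k2r.
set u := (L / (20 * l))%R.
have u2 : (2 <= u)%R.
  rewrite /u; apply: (Rmult_le_reg_r (20 * l)); first lra.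
  field_simplify; lra.
have xu : x = (L ^ 2 * u / 10)%R by rewrite /x /u; field; lra.
set t := floor_nat u.
have [t1r t2r] := floor_spec (ltac:(lra) : (0 <= u)%R); rewrite -/t in t1r t2r.
have uL : (u <= L)%R.
  rewrite /u; apply: (Rmult_le_reg_r (20 * l)); first lra.
  field_simplify; nra.
set j0 := k %/ 2.
have k1 : 0 < k.
  apply: INR_leq; have e1 : INR 1 = 1%R by [].
  rewrite e1; lra.
have kj1 : 2 * j0 <= k.
  rewrite /j0; lia.
have kj2 : k <= 2 * j0 + 1 by rewrite /j0; lia.
have rkj1 := leq_INR kj1; have rkj2 := leq_INR kj2.
rewrite INR_muln in rkj1; rewrite INR_addn INR_muln in rkj2.
have I2 : INR 2 = 2%R by [].
have I1 : INR 1 = 1%R by [].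
rewrite I2 in rkj1 rkj2; rewrite I1 in rkj2.
have ek : INR (k - 1) = (INR k - 1)%R.
  have e : k = (k - 1) + 1 by lia.
  by rewrite {2}e INR_addn I1; lra.
have j0p : (0 <= INR j0)%R by apply: pos_INR.
have tp : (0 <= INR t)%R by apply: pos_INR.
have Mp : (0 <= INR M)%R by apply: pos_INR.
have H1 : M <= (k - 1) * (t * j0).
  apply: INR_leq; rewrite !INR_muln ek.
  have a1 : (L - 2 <= INR k - 1)%R by lra.
  have a2 : (u / 2 <= INR t)%R by lra.
  have a3 : ((L - 2) / 2 <= INR j0)%R by lra.
  have b1 : ((u / 2) * ((L - 2) / 2) <= INR t * INR j0)%R.
    apply: Rmult_le_compat => //; lra.
  have b2 : ((L - 2) * ((u / 2) * ((L - 2) / 2)) <= (INR k - 1) * (INR t * INR j0))%R.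
    apply: Rmult_le_compat => //; try lra.
    apply: Rmult_le_pos; lra.
  have b3 : (L ^ 2 * u / 10 <= (L - 2) * ((u / 2) * ((L - 2) / 2)))%R.
    have : (L ^ 2 / 10 <= (L - 2) * (L - 2) / 4)%R by rewrite /=; nra.
    nra.
  lra.
have MleL : (INR M <= L ^ 3)%R.
  apply: (Rle_trans _ _ _ M1); rewrite /x.
  have : (0 <= L ^ 3)%R by apply: pow_le; lra.
  move=> h; apply: (Rle_trans _ (1 / 200 * L ^ 3 / 1)); last lra.
  rewrite /Rdiv; apply: Rmult_le_compat_l; first lra.
  apply: Rinv_le_contravar; lra.
have H2 : M * expn (2 * expn M 2) t + (k - 1) * (t * j0) <= n.
  apply: INR_leq; rewrite INR_addn !INR_muln INR_expn INR_muln INR_expn ek I2.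
  have q1 : (2 * INR M ^ 2 <= exp l ^ 7)%R.
    rewrite exp_ln; last lra.
    have : (INR M ^ 2 <= (L ^ 3) ^ 2)%R by apply: pow_incr; lra.
    rewrite -pow_mult /=; nra.
  have q2 : ((2 * INR M ^ 2) ^ t <= exp (7 * L / 20))%R.
    apply: (Rle_trans _ ((exp l ^ 7) ^ t)).
      apply: pow_incr; split; last exact q1.
      apply: Rmult_le_pos; [lra | apply: pow_le; lra].
    rewrite !exp_pow; apply: exp_mono.
    have I7 : INR 7 = 7%R by rewrite /=; lra.
    rewrite I7.
    have : (INR t * l <= L / 20)%R.
      have : (u * l = L / 20)%R by rewrite /u; field; lra.
      nra.
    nra.
  have q3 : ((INR k - 1) * (INR t * INR j0) <= L ^ 3)%R.
    have : (INR t * INR j0 <= L * L)%R by apply: Rmult_le_compat => //; lra.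
    rewrite /=; nra.
  have q4 : (1 <= exp (7 * L / 20))%R by have := exp_ineq1_le (7 * L / 20); lra.
  have q5 : (2 * L ^ 3 <= exp (13 * L / 20))%R by apply: big_exp; lra.
  have q6 : (exp (13 * L / 20) * exp (7 * L / 20) = INR n)%R
    by rewrite -exp_plus -Lexp; congr exp; lra.
  have q7 : (INR M * (2 * INR M ^ 2) ^ t <= L ^ 3 * exp (7 * L / 20))%R.
    apply: Rmult_le_compat => //; apply: pow_le; apply: Rmult_le_pos; [lra|apply: pow_le; lra].
  have q8 : (0 <= L ^ 3)%R by apply: pow_le; lra.
  nra.
have Mn : M <= n.
  apply: leq_trans H2; apply: leq_trans (leq_addr _ _).
  case: (posnP M) => [->//|M0]; apply: leq_pmulr.
  by rewrite expn_gt0 muln_gt0 expn_gt0 M0.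
have hp : HP E M k.
  move=> S cS.
  have [_ [I [sI [iI LI]]]] := H S cS.
  have kI : k <= #|I| by apply: INR_leq; rewrite -/L in LI; lra.
  have [J [sJ cJ]] := ex_sub kI.
  exists J; split; first exact: subset_trans sJ sI.
  split => //; apply: indepb_sub sJ _; apply/indepbP; exact: iI.
have km : k <= M.
  have [S [_ cS]] : exists S : {set 'I_n}, S \subset setT /\ #|S| = M
    by apply: ex_sub; rewrite cardsT card_ord.
  have [I [sI [cI _]]] := hp S cS.
  by rewrite -cI -cS; apply: subset_leq_card.
have [S [cS cl]] := @comb n E sym M k t (k - 1) hp k1 km H1 H2.
have [[K [sK [clK LK]]] _] := H S cS.
have := leq_INR (cl K sK clK); rewrite ek -/L in LK *; lra.
Qed.
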